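(* Let $\gamma=(\alpha,\beta)\in\mathbb N_0^{2n}$ with $\alpha\ge\beta$, and let $y_\pm^{(\ell)}$ be the Commutator Chain of Type II generated by $g_+^\gamma,g_-^\gamma$. Suppose that at least one of the following holds: (a) there is an index $k$ with $\alpha_k+\beta_k\ge2$ and $\alpha_k\neq\beta_k$; (b) there are two distinct indices $k,k'$ with $\alpha_k+\beta_k=\alpha_{k'}+\beta_{k'}=1$. Then for all $\ell\ge0$ and $\sigma\in\{+,-\}$, $\deg(y_\sigma^{(\ell)})=3^\ell(|\gamma|-2)+2$.
   Context: Fix $n\ge 1$. The Weyl algebra $A_n$ is the unital associative $\mathbb{C}$-algebra generated by $a_1,\dots,a_n,a_1^\dagger,\dots,a_n^\dagger$ subject to $[a_i,a_j^\dagger]=\delta_{ij}$ and $[a_i,a_j]=[a_i^\dagger,a_j^\dagger]=0$. For $\gamma=(\alpha,\beta)\in\mathbb N_0^{2n}$ set $a^{\gamma}=(a_1^\dagger)^{\alpha_1}\cdots(a_n^\dagger)^{\alpha_n}a_1^{\beta_1}\cdots a_n^{\beta_n}$; these form a $\mathbb C$-basis; $|\gamma|=\sum_j\alpha_j+\sum_j\beta_j$. For $0\neq g\in A_n$, $\deg(g)$ is the largest $|\gamma|$ with $a^\gamma$ having nonzero coefficient in $g$; $\deg(0)=-\infty$. $\dagger$ is the conjugate-linear anti-automorphism with $(a_j)^\dagger=a_j^\dagger$, $(a_j^\dagger)^\dagger=a_j$. $g_+^\gamma=i((a^\gamma)^\dagger+a^\gamma)$, $g_-^\gamma=(a^\gamma)^\dagger-a^\gamma$.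 The order on $\mathbb N_0^n$ is lexicographic. Commutator Chain of Type II generated by $g_+^\gamma,g_-^\gamma$: $y_\sigma^{(0)}=g_\sigma^\gamma$ for $\sigma\in\{+,-\}$, and $y_\sigma^{(\ell+1)}=[y_\sigma^{(\ell)},[y_+^{(\ell)},y_-^{(\ell)}]]$ for $\ell\ge0$. *)

(* Defs.v *)
(* The Weyl algebra A_n over a numeric closed field C
   (e.g. C = algC, or complex R for R : rcfType), modelled concretely on its
   normal-ordered PBW basis a^gamma = (a^dag)^alpha a^beta. *)
From HB Require Import structures.
From mathcomp Require Import all_boot all_order all_algebra.
From mathcomp Require Import finmap.
From mathcomp.multinomials Require Import monalg.

Set Implicit Arguments.
Unset Strict Implicit.
Unset Printing Implicit Defensive.

Import Order.TTheory GRing.Theory Num.Theory.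
Local Open Scope ring_scope.

Section Weyl.
Variables (C : numClosedFieldType) (n : nat).

Definition widx := (n.-tuple nat * n.-tuple nat)%type.

Definition weyl := {malg C[widx]}.

Definition wbasis (g : widx) : weyl := << 1 *g g >>.

Definition wsize (g : widx) : nat := (sumn g.1 + sumn g.2)%N.

(* normal-ordered product of basis elements (Wick / normal-ordering rule):
   a^(al,be) a^(al',be') =
     sum_{kappa, kappa_j <= min(be_j, al'_j)}
        prod_j C(be_j,kappa_j) C(al'_j,kappa_j) kappa_j!  a^(al+al'-kappa, be+be'-kappa)
   which follows from a^q (a^dag)^r = sum_k C(q,k) C(r,k) k! (a^dag)^(r-k) a^(q-k)
   in each mode, different modes commuting. *)
Definition wbprod (u v : widx) : weyl :=
  \sum_(k : {ffun 'I_n -> 'I_(sumn u.2).+1}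
          | [forall j, (k j <= tnth u.2 j)%N && (k j <= tnth v.1 j)%N])
     << (\prod_(j < n) ('C(tnth u.2 j, k j) * 'C(tnth v.1 j, k j) * (k j)`!)%N)%:R
        *g (mktuple (fun j => tnth u.1 j + tnth v.1 j - k j)%N,
            mktuple (fun j => tnth u.2 j + tnth v.2 j - k j)%N) >>.

Definition wmul (p q : weyl) : weyl :=
  \sum_(u <- msupp p) \sum_(v <- msupp q) (p@_u * q@_v) *: wbprod u v.

Definition wcomm (p q : weyl) : weyl := wmul p q - wmul q p.

(* dagger: conjugate-linear anti-automorphism with a_j^dag = a_j^dag;
   on the basis, ((a^dag)^al a^be)^dag = (a^dag)^be a^al. *)
Definition wdag (p : weyl) : weyl :=
  \sum_(u <- msupp p) << (p@_u)^* *g (u.2, u.1) >>.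

Definition gplus (g : widx) : weyl := 'i *: (wdag (wbasis g) + wbasis g).
Definition gminus (g : widx) : weyl := wdag (wbasis g) - wbasis g.

Fixpoint chainII (yp ym : weyl) (l : nat) : weyl * weyl :=
  match l with
  | 0 => (yp, ym)
  | l'.+1 => let: (p, m) := chainII yp ym l' in
             (wcomm p (wcomm p m), wcomm m (wcomm p m))
  end.

(* degree; None plays the role of -infinity (deg 0) *)
Definition wdeg (p : weyl) : option nat :=
  if p == 0 then None else Some (\max_(u <- msupp p) wsize u)%N.

End Weyl.

Definition lex_ge (n : nat) (al be : n.-tuple nat) : Prop :=
  al = be \/
  exists k : 'I_n, (forall j : 'I_n, (j < k)%N -> tnth al j = tnth be j)
                   /\ (tnth be k < tnth al k)%N.

(* Main.v *)
Require Import Defs.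
From HB Require Import structures.
From mathcomp Require Import all_boot all_order all_algebra.
From mathcomp Require Import finmap.
From mathcomp.multinomials Require Import monalg.
From mathcomp Require Import zify ring.
Import Order.TTheory GRing.Theory Num.Theory.
Local Open Scope ring_scope.

Set Implicit Arguments.
Unset Strict Implicit.
Unset Printing Implicit Defensive.


Section Basic.
Variables (C : numClosedFieldType) (n : nat).
Local Notation idx := (widx n).
Local Notation W := (weyl C n).

Lemma sumn_tuple (t : n.-tuple nat) : sumn t = (\sum_(j < n) tnth t j)%N.
Proof. by rewrite sumnE big_tuple. Qed.

Definition tgt (u v : idx) (k : 'I_n -> nat) : idx :=
  (mktuple (fun j => tnth u.1 j + tnth v.1 j - k j)%N,
   mktuple (fun j => tnth u.2 j + tnth v.2 j - k j)%N).

Lemma eq_tgt u v k k' : (forall j, k j = k' j) -> tgt u v k = tgt u v k'.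
Proof. by move=> e; rewrite /tgt; congr pair; apply: eq_mktuple => j; rewrite e. Qed.

Lemma tgtC u v k : tgt u v k = tgt v u k.
Proof. by rewrite /tgt; congr pair; apply: eq_mktuple => j; rewrite addnC. Qed.

Lemma sum_sub (f k : 'I_n -> nat) : (forall j, k j <= f j)%N ->
  (\sum_(j < n) (f j - k j) + \sum_(j < n) k j = \sum_(j < n) f j)%N.
Proof. move=> h; rewrite -big_split; apply: eq_bigr => j _; rewrite /= subnK // h. Qed.

Lemma wsizeE (u : idx) : wsize u = (\sum_(j < n) (tnth u.1 j + tnth u.2 j))%N.
Proof. by rewrite /wsize !sumn_tuple big_split. Qed.

Lemma sumn_mktuple (f : 'I_n -> nat) : sumn (mktuple f) = (\sum_(j < n) f j)%N.
Proof. by rewrite sumn_tuple; apply: eq_bigr => j _; rewrite tnth_mktuple. Qed.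

Lemma wsize_tgt u v k :
  (forall j, k j <= tnth u.1 j + tnth v.1 j)%N ->
  (forall j, k j <= tnth u.2 j + tnth v.2 j)%N ->
  (wsize (tgt u v k) + 2 * \sum_(j < n) k j = wsize u + wsize v)%N.
Proof.
move=> h1 h2; rewrite /wsize /tgt !sumn_mktuple !sumn_tuple.
have e1 := sum_sub h1; have e2 := sum_sub h2.
rewrite !big_split /= in e1 e2 *.
lia.
Qed.


Definition adm (u v : idx) (k : {ffun 'I_n -> 'I_(sumn u.2).+1}) :=
  [forall j, (k j <= tnth u.2 j)%N && (k j <= tnth v.1 j)%N].
Definition coef (u v : idx) (k : {ffun 'I_n -> 'I_(sumn u.2).+1}) : nat :=
  (\prod_(j < n) ('C(tnth u.2 j, k j) * 'C(tnth v.1 j, k j) * (k j)`!))%N.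

Arguments adm : clear implicits.
Arguments coef : clear implicits.

Lemma wbprodE (u v w : idx) : (wbprod C u v)@_w =
  \sum_(k | adm u v k) (coef u v k)%:R *+ (tgt u v (fun j => k j) == w).
Proof. rewrite /wbprod raddf_sum; apply: eq_bigr => k _; exact: mcoeffU. Qed.

Lemma adm_size (u v : idx) k : adm u v k ->
  (wsize (tgt u v (fun j => k j)) + 2 * \sum_(j < n) k j = wsize u + wsize v)%N.
Proof.
move/forallP=> hk; apply: wsize_tgt => j; have /andP[h1 h2] := hk j; lia.
Qed.

Lemma wbprod_nz (u v w : idx) : (wbprod C u v)@_w != 0 ->
  exists t, (wsize w + 2 * t = wsize u + wsize v)%N.
Proof.
rewrite wbprodE => nz.
case: (boolP [exists k, adm u v k && (tgt u v (fun j => k j) == w)]).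
  by case/existsP=> k /andP[hk /eqP hw]; exists (\sum_(j < n) k j)%N; rewrite -hw adm_size.
move/existsPn=> hn; case/eqP: nz; apply: big1 => k hk.
by have := hn k; rewrite hk /= => /negbTE ->.
Qed.

Lemma wbprod_top (u v w : idx) : wsize w = (wsize u + wsize v)%N ->
  (wbprod C u v)@_w = (tgt u v (fun _ => 0%N) == w)%:R.
Proof.
move=> hw; rewrite wbprodE.
pose k0 : {ffun 'I_n -> 'I_(sumn u.2).+1} := [ffun => ord0].
have a0 : adm u v k0 by apply/forallP => j; rewrite ffunE.
rewrite (bigD1 k0) //= big1 ?addr0.
  have -> : coef u v k0 = 1%N by rewrite /coef big1 // => j _; rewrite ffunE /= !bin0 fact0.
  by rewrite (@eq_tgt u v _ (fun _ => 0%N)) // => j; rewrite ffunE.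
move=> k /andP[hk nk]; case: eqP => // ht.
have := adm_size hk; rewrite ht hw => e.
have /eqP : (\sum_(j < n) k j = 0)%N by lia.
rewrite sum_nat_eq0 => /forallP h0.
case/eqP: nk; apply/ffunP => j; apply/val_inj; rewrite ffunE /=.
by have /eqP := h0 j.
Qed.


Lemma mulrF (x : C) : x *+ false = 0. Proof. by []. Qed.
Lemma mulrT (x : C) : x *+ true = x. Proof. by []. Qed.

Definition ej (j : 'I_n) := fun i : 'I_n => nat_of_bool (i == j).

Lemma sum1_ex (k : 'I_n -> nat) : (\sum_(j < n) k j = 1)%N ->
  exists j, k j = 1%N /\ forall i, i != j -> k i = 0%N.
Proof.
move=> h.
case: (boolP [exists j, k j != 0%N]) => [/existsP[j hj]|/existsPn hn]; last first.
  by move: h; rewrite big1 // => j _; have /negPn/eqP := hn j.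
exists j; move: h; rewrite (bigD1 j) //= => h.
have h0 : (\sum_(i < n | i != j) k i = 0)%N by move: hj h; rewrite -lt0n; set S := bigop.body _ _ _; lia.
split; first by move: hj h; rewrite h0 -lt0n; lia.
move=> i ne; move/eqP: h0; rewrite sum_nat_eq0 => /forallP/(_ i).
by rewrite ne => /eqP.
Qed.

Lemma tuple0 (t : n.-tuple nat) j : sumn t = 0%N -> tnth t j = 0%N.
Proof.
rewrite sumn_tuple => /eqP; rewrite sum_nat_eq0 => /forallP/(_ j) /eqP //.
Qed.

Lemma wbprod_sub (u v w : idx) : (wsize w + 2 = wsize u + wsize v)%N ->
  (wbprod C u v)@_w =
  \sum_(j < n) (tnth u.2 j * tnth v.1 j)%:R *+ (tgt u v (ej j) == w).
Proof.
move=> hw; rewrite wbprodE.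
have key : forall k, adm u v k -> tgt u v (fun j => k j) = w ->
    (\sum_(j < n) k j = 1)%N.
  by move=> k hk ht; have := adm_size hk; rewrite ht -hw; lia.
case: (posnP (sumn u.2)) => hN.
  rewrite [RHS]big1; last by move=> j _; rewrite tuple0 // mul0n mul0rn.
  apply: big1 => k hk; case: eqP => // ht;  
  have := key k hk ht; rewrite big1 // => j _.
  move/forallP: hk => /(_ j) /andP[h1 _]; move: h1; rewrite tuple0 //; lia.
pose kj (j : 'I_n) : {ffun 'I_n -> 'I_(sumn u.2).+1} :=
  [ffun i => if i == j then inord 1 else ord0].
have kjE : forall j i, (kj j i : nat) = ej j i.
  by move=> j i; rewrite ffunE /ej; case: eqP => _ //=; rewrite inordK //; lia.
have kj_inj : injective kj.
  move=> j j' e; have := kjE j j; rewrite e kjE /ej eqxx; case: eqP => //.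
transitivity (\sum_(k | adm u v k) \sum_(j < n)
   ((coef u v k)%:R *+ (tgt u v (fun j => k j) == w) *+ (k == kj j) : C)).
  apply: eq_bigr => k hk; case: eqP => ht; last first.
    by rewrite mulrF big1 // => j _; rewrite mul0rn.
  have [j [h1 h0]] := sum1_ex (key k hk ht).
  have ekj : k = kj j.
    apply/ffunP => i; apply/val_inj; rewrite /= kjE /ej.
    by case: eqP => [->|/eqP ne] //=; apply: h0.
  rewrite (bigD1 j) //= ekj eqxx mulrT big1 ?addr0 // => i ne.
  by rewrite (inj_eq kj_inj) eq_sym (negbTE ne) mulrF.
rewrite exchange_big; apply: eq_bigr => j _.
have ctgt : tgt u v (fun i => kj j i) = tgt u v (ej j) by apply: eq_tgt => i; rewrite kjE.
case: (boolP (adm u v (kj j))) => ha.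
  rewrite (bigD1 (kj j)) //= eqxx mulrT big1 ?addr0; last first.
    by move=> k /andP[_ /negbTE ->]; rewrite mulrF.
  rewrite ctgt; congr (_%:R *+ _).
  rewrite /coef (bigD1 j) //= big1 ?muln1 => [|i ne]; last first.
    by rewrite kjE /ej (negbTE ne) /= !bin0 fact0.
  by rewrite kjE /ej eqxx /= !bin1 muln1.
rewrite big1; last first.
  move=> k hk; case: (k =P kj j) => [e|_]; last by rewrite mulrF.
  by move: ha; rewrite -e hk.
have -> : (tnth u.2 j * tnth v.1 j = 0)%N; last by rewrite mul0rn.
apply/eqP; move: ha; apply: contraNT; rewrite muln_eq0 negb_or -!lt0n => /andP[a b].
apply/forallP=> i; rewrite kjE /ej; case: eqP => [->|_] //=.
by rewrite a b.
Qed.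


Lemma wmulE (p q : W) (w : idx) : (wmul p q)@_w =
  \sum_(u <- msupp p) \sum_(v <- msupp q) p@_u * q@_v * (wbprod C u v)@_w.
Proof.
rewrite /wmul raddf_sum; apply: eq_bigr => u _; rewrite raddf_sum.
by apply: eq_bigr => v _; exact: mcoeffZ.
Qed.

End Basic.

Section B.
Variables (C : numClosedFieldType) (n : nat).
Local Notation idx := (widx n).
Local Notation W := (weyl C n).
Lemma wcommE (p q : W) (w : idx) : (wcomm p q)@_w =
  \sum_(u <- msupp p) \sum_(v <- msupp q)
     p@_u * q@_v * ((wbprod C u v)@_w - (wbprod C v u)@_w).
Proof.
have e1 := wmulE p q w; have e2 := wmulE q p w.
(transitivity ((wmul p q)@_w - (wmul q p)@_w); first exact: mcoeffB).
apply: (etrans (f_equal2 (fun a b => a - b) e1 e2)).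
rewrite [X in _ - X]exchange_big -sumrB.
apply: eq_bigr => u _; rewrite -sumrB; apply: eq_bigr => v _.
by rewrite mulrBr [q@_v * _]mulrC.
Qed.
Definition diffj (u v : idx) j : C :=
  (tnth u.2 j * tnth v.1 j)%:R - (tnth v.2 j * tnth u.1 j)%:R.

Lemma bc_high (u v w : idx) : (wsize u + wsize v < wsize w + 2)%N ->
  (wbprod C u v)@_w - (wbprod C v u)@_w = 0.
Proof.
move=> h; case: (wsize w =P (wsize u + wsize v)%N) => e.
  rewrite (@wbprod_top C n u v w); last by lia.
  rewrite (@wbprod_top C n v u w); last by lia.
  by rewrite tgtC subrr.
have z : forall a b, (wsize a + wsize b = wsize u + wsize v)%N ->
    (wbprod C a b)@_w = 0.
  move=> a b hab; apply/eqP; apply: contraT => /wbprod_nz [t ht]; lia.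
rewrite (z u v) // (z v u) ?subrr //; lia.
Qed.

Lemma bc_sub (u v w : idx) : (wsize w + 2 = wsize u + wsize v)%N ->
  (wbprod C u v)@_w - (wbprod C v u)@_w =
  \sum_(j < n) diffj u v j *+ (tgt u v (ej j) == w).
Proof.
move=> h; rewrite (@wbprod_sub C n u v w) // (@wbprod_sub C n v u w); last by rewrite h addnC.
rewrite -sumrB.
by apply: eq_bigr => j _; rewrite tgtC mulrnBl.
Qed.

Lemma term_tgt (u v : idx) j i :
  (1 <= tnth u.1 j + tnth v.1 j)%N -> (1 <= tnth u.2 j + tnth v.2 j)%N ->
  (tnth (tgt u v (ej j)).1 i + tnth (tgt u v (ej j)).2 i + 2 * (i == j) =
   (tnth u.1 i + tnth u.2 i) + (tnth v.1 i + tnth v.2 i))%N.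
Proof.
move=> h1 h2; rewrite /tgt !tnth_mktuple /ej.
case: (i =P j) => [->|_] /=; lia.
Qed.

Lemma sum_tgt (P : pred 'I_n) (u v : idx) j :
  (1 <= tnth u.1 j + tnth v.1 j)%N -> (1 <= tnth u.2 j + tnth v.2 j)%N ->
  (\sum_(i < n | P i) (tnth (tgt u v (ej j)).1 i + tnth (tgt u v (ej j)).2 i)
     + 2 * P j =
   \sum_(i < n | P i) (tnth u.1 i + tnth u.2 i) +
   \sum_(i < n | P i) (tnth v.1 i + tnth v.2 i))%N.
Proof.
move=> h1 h2; rewrite -big_split /=.
have eT : forall i, i != j ->
    (tnth (tgt u v (ej j)).1 i + tnth (tgt u v (ej j)).2 i =
     (tnth u.1 i + tnth u.2 i) + (tnth v.1 i + tnth v.2 i))%N.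
  by move=> i ne; have := term_tgt i h1 h2; rewrite (negbTE ne) /=; lia.
case Pj: (P j).
  rewrite (bigD1 j Pj) [X in _ = X](bigD1 j Pj) /=.
  rewrite (eq_bigr _ (fun i hi => eT i (andP hi).2)).
  by have := term_tgt j h1 h2; rewrite eqxx /= => e; rewrite addnAC e.
rewrite /= muln0 addn0; apply: eq_bigr => i Pi; apply: eT.
by apply: contraTneq Pi => ->; rewrite Pj.
Qed.

Lemma wsize_tgt1 (u v : idx) j :
  (1 <= tnth u.1 j + tnth v.1 j)%N -> (1 <= tnth u.2 j + tnth v.2 j)%N ->
  (wsize (tgt u v (ej j)) + 2 = wsize u + wsize v)%N.
Proof. by move=> h1 h2; have := sum_tgt predT h1 h2; rewrite !wsizeE. Qed.

Lemma diffj_nz (u v : idx) j : diffj u v j != 0 ->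
  (1 <= tnth u.1 j + tnth v.1 j)%N /\ (1 <= tnth u.2 j + tnth v.2 j)%N.
Proof.
rewrite /diffj; case: (posnP (tnth u.2 j * tnth v.1 j)) => [e1|].
  case: (posnP (tnth v.2 j * tnth u.1 j)) => [e2|].
    by rewrite e1 e2 subrr eqxx.
  by rewrite muln_gt0 => /andP[a b] _; lia.
by rewrite muln_gt0 => /andP[a b] _; lia.
Qed.

Lemma sum_nz (I : eqType) (s : seq I) (F : I -> C) :
  \sum_(u <- s) F u != 0 -> exists2 u, u \in s & F u != 0.
Proof.
case: (boolP (has (fun u => F u != 0) s)) => [/hasP[u hu hf] _|/hasPn hn].
  by exists u.
by rewrite big1_seq ?eqxx // => u /andP[_ /hn /negPn /eqP].
Qed.

Lemma sum_eqmn (I : eqType) (s : seq I) (F : I -> C) (a : I) : uniq s ->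
  \sum_(u <- s) F u *+ (u == a) = F a *+ (a \in s).
Proof.
elim: s => [|x s IH]; first by rewrite big_nil.
rewrite big_cons /= in_cons => /andP[xs us]; rewrite IH //.
case: (x =P a) => [<-|ne] /=; first by rewrite eqxx (negbTE xs) mulr0n addr0.
by rewrite mulr0n add0r (introF eqP (nesym ne)).
Qed.

End B.

Section Cc.
Variables (C : numClosedFieldType) (n : nat).
Local Notation idx := (widx n).
Local Notation W := (weyl C n).
Local Notation diffj := (@diffj C n).

Definition phi (J : pred 'I_n) (u : idx) : nat :=
  (\sum_(i < n | J i) (tnth u.1 i + tnth u.2 i))%N.

Definition topP (J : pred 'I_n) (p : W) (D M : nat) :=
  forall u, p@_u != 0 -> (wsize u <= D)%N /\ (wsize u = D -> M <= phi J u)%N.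

Lemma tgt_phi J (u v : idx) j :
  (1 <= tnth u.1 j + tnth v.1 j)%N -> (1 <= tnth u.2 j + tnth v.2 j)%N ->
  (phi J (tgt u v (ej j)) + 2 * J j = phi J u + phi J v)%N.
Proof. exact: sum_tgt. Qed.

Lemma comm_top J (p q : W) Dp Dq Mp Mq :
  topP J p Dp Mp -> topP J q Dq Mq ->
  topP J (wcomm p q) (Dp + Dq - 2) (Mp + Mq - 2).
Proof.
move=> hp hq w; rewrite wcommE => /sum_nz [u hu /sum_nz [v hv]].
rewrite mulf_eq0 negb_or => /andP[_ hb].
have pu : p@_u != 0 by rewrite mcoeff_neq0.
have qv : q@_v != 0 by rewrite mcoeff_neq0.
have [su fu] := hp u pu; have [sv fv] := hq v qv.
have hw : (wsize w + 2 <= wsize u + wsize v)%N.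
  rewrite leqNgt; apply: contra hb => h; apply/eqP; exact: bc_high.
split; first lia.
move=> ew.
have eu : wsize u = Dp by lia.
have ev : wsize v = Dq by lia.
move: hb; rewrite bc_sub; last lia.
case/sum_nz => j _.
case: (tgt u v (ej j) =P w) => [et|]; last by rewrite /= mulr0n eqxx.
rewrite /= mulr1n => dj; have [b1 b2] := diffj_nz dj.
have := tgt_phi J b1 b2; rewrite et; have := fu eu; have := fv ev.
case: (J j) => /=; lia.
Qed.

Lemma comm_lead J (p q : W) Dp Dq Mp Mq (w : idx) :
  topP J p Dp Mp -> topP J q Dq Mq -> (2 <= Dp + Dq)%N -> (2 <= Mp + Mq)%N ->
  wsize w = (Dp + Dq - 2)%N -> phi J w = (Mp + Mq - 2)%N ->
  (wcomm p q)@_w = \sum_(u <- msupp p) \sum_(v <- msupp q)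
   (p@_u * q@_v * \sum_(j < n | J j) diffj u v j *+ (tgt u v (ej j) == w))
     *+ [&& wsize u == Dp, phi J u == Mp, wsize v == Dq & phi J v == Mq].
Proof.
move=> hp hq hD hM hw hf.
rewrite wcommE; apply: eq_big_seq => u hu; apply: eq_big_seq => v hv.
have pu : p@_u != 0 by rewrite mcoeff_neq0.
have qv : q@_v != 0 by rewrite mcoeff_neq0.
have [su fu] := hp u pu; have [sv fv] := hq v qv.
case: (boolP ((wsize u == Dp) && (wsize v == Dq))) => [/andP[/eqP eu /eqP ev]|ne];
    last first.
  rewrite bc_high; last by move: ne; rewrite negb_and => /orP[] /eqP ?; lia.
  have -> : [&& wsize u == Dp, phi J u == Mp, wsize v == Dq & phi J v == Mq] = false.
    by apply/negbTE; apply: contra ne => /and4P[-> _ -> _].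
  by rewrite mulr0 mulr0n.
rewrite bc_sub; last lia.
rewrite eu ev !eqxx /=.
have key : forall j, diffj u v j *+ (tgt u v (ej j) == w) != 0 ->
    [&& J j, phi J u == Mp & phi J v == Mq].
  move=> j; case: (tgt u v (ej j) =P w) => [et|]; last by rewrite /= mulr0n eqxx.
  rewrite /= mulr1n => dj; have [b1 b2] := diffj_nz dj.
  have := tgt_phi J b1 b2; rewrite et hf; have := fu eu; have := fv ev.
  case: (J j) => /= h1 h2 e; last lia.
  by apply/andP; split; apply/eqP; lia.
case: (boolP ((phi J u == Mp) && (phi J v == Mq))) => hc.
  rewrite mulr1n; congr (_ * _).
  rewrite [RHS]big_mkcond /=; apply: eq_bigr => j _; case Jj: (J j) => //.
  apply/eqP; apply: contraT => tj; have := key j tj; by rewrite Jj.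
rewrite mulr0n big1 ?mulr0 // => j _; apply/eqP; apply: contraT => tj.
by have /and3P[_ a b] := key j tj; rewrite a b in hc.
Qed.

Lemma lead_sum (p : W) (L : pred idx) (U1 U2 : idx) (c1 c2 : C) (G : idx -> C) :
  (forall u, L u -> p@_u = c1 *+ (u == U1) + c2 *+ (u == U2)) ->
  \sum_(u <- msupp p) (p@_u * G u) *+ L u = (c1 * G U1) *+ L U1 + (c2 * G U2) *+ L U2.
Proof.
move=> hd.
transitivity (\sum_(u <- msupp p)
   ((c1 * G u) *+ L u *+ (u == U1) + (c2 * G u) *+ L u *+ (u == U2))).
  apply: eq_bigr => u _; case Lu: (L u); last by rewrite /= !mulr0n !mul0rn addr0.
  by rewrite hd // /= !mulr1n mulrDl !mulrnAl.
rewrite big_split /= !sum_eqmn ?fset_uniq //.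
have m : forall U, U \notin msupp p -> L U -> c1 *+ (U == U1) + c2 *+ (U == U2) = 0.
  by move=> U hU LU; rewrite -hd // mcoeff_outdom.
case: (U1 =P U2) => [e|ne].
  subst U2.
  case: (boolP (U1 \in msupp p)) => h; first by rewrite !mulr1n.
  rewrite !mulr0n; case L1: (L U1); last by rewrite /= !mulr0n addr0.
  have := m U1 h L1; rewrite eqxx /= !mulr1n => e0.
  by rewrite /= ?mulr1n addr0 -mulrDl e0 mul0r.
have t : forall U c, (U \notin msupp p -> L U -> c = 0) ->
    (c * G U) *+ L U *+ (U \in msupp p) = (c * G U) *+ L U.
  move=> U c hc; case: (boolP (U \in msupp p)) => h; first by rewrite mulr1n.
  by case LU: (L U); rewrite /= ?mulr0n // hc // mul0r.
rewrite t; last first.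
  by move=> h LU; have := m U1 h LU; rewrite eqxx (introF eqP ne) /= mulr1n addr0.
rewrite t //.
move=> h LU; have := m U2 h LU; rewrite eqxx (introF eqP (nesym ne)) /= mulr1n add0r.
by [].
Qed.

End Cc.

Section D.
Variables (C : numClosedFieldType) (n : nat).
Local Notation idx := (widx n).
Local Notation W := (weyl C n).
Local Notation diffj := (@diffj C n).

Definition leadb (J : pred 'I_n) (D M : nat) (u : idx) :=
  (wsize u == D) && (phi J u == M).

Definition descr (J : pred 'I_n) (p : W) (D M : nat) (U1 U2 : idx) (c1 c2 : C) :=
  forall u, wsize u = D -> phi J u = M -> p@_u = c1 *+ (u == U1) + c2 *+ (u == U2).

Definition Ssum (J : pred 'I_n) (u v w : idx) : C :=
  \sum_(j < n | J j) diffj u v j *+ (tgt u v (ej j) == w).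

Lemma lead2 J (p q : W) Dp Dq Mp Mq U1 U2 V1 V2 c1 c2 e1 e2 w :
  topP J p Dp Mp -> topP J q Dq Mq -> (2 <= Dp + Dq)%N -> (2 <= Mp + Mq)%N ->
  descr J p Dp Mp U1 U2 c1 c2 -> descr J q Dq Mq V1 V2 e1 e2 ->
  leadb J Dp Mp U1 -> leadb J Dp Mp U2 -> leadb J Dq Mq V1 -> leadb J Dq Mq V2 ->
  wsize w = (Dp + Dq - 2)%N -> phi J w = (Mp + Mq - 2)%N ->
  (wcomm p q)@_w = c1 * e1 * Ssum J U1 V1 w + c1 * e2 * Ssum J U1 V2 w
                 + c2 * e1 * Ssum J U2 V1 w + c2 * e2 * Ssum J U2 V2 w.
Proof.
move=> hp hq hD hM dp dq lU1 lU2 lV1 lV2 hw hf.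
rewrite (comm_lead hp hq hD hM hw hf).
transitivity (\sum_(u <- msupp p)
  (p@_u * \sum_(v <- msupp q) (q@_v * Ssum J u v w) *+ leadb J Dq Mq v)
    *+ leadb J Dp Mp u).
  apply: eq_bigr => u _; case: (boolP (leadb J Dp Mp u)) => Lu.
    rewrite mulr1n mulr_sumr; apply: eq_bigr => v _.
    have -> : [&& wsize u == Dp, phi J u == Mp, wsize v == Dq & phi J v == Mq]
        = leadb J Dq Mq v by move: Lu; rewrite /leadb => /andP[-> ->].
    by rewrite mulrnAr mulrA.
  rewrite mulr0n big1 // => v _.
  have -> : [&& wsize u == Dp, phi J u == Mp, wsize v == Dq & phi J v == Mq]
      = false by apply/negbTE; apply: contra Lu => /and4P[a b _ _]; rewrite /leadb a b.
  by rewrite mulr0n.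
have dp' : forall u, leadb J Dp Mp u -> p@_u = c1 *+ (u == U1) + c2 *+ (u == U2).
  by move=> u /andP[/eqP a /eqP b]; apply: dp.
have dq' : forall u, leadb J Dq Mq u -> q@_u = e1 *+ (u == V1) + e2 *+ (u == V2).
  by move=> u /andP[/eqP a /eqP b]; apply: dq.
rewrite (lead_sum _ dp') lU1 lU2 !mulr1n.
rewrite !(lead_sum _ dq') lV1 lV2 !mulr1n.
by rewrite !mulrDr !mulrA addrA.
Qed.

Definition swap (u : idx) : idx := (u.2, u.1).

Lemma swapK u : swap (swap u) = u. Proof. by case: u. Qed.

Lemma swap_tgt u v k : swap (tgt u v k) = tgt (swap u) (swap v) k.
Proof. by []. Qed.

Lemma wsize_swap u : wsize (swap u) = wsize u.
Proof. by rewrite /wsize /= addnC. Qed.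

Lemma phi_swap J u : phi J (swap u) = phi J u.
Proof. by rewrite /phi; apply: eq_bigr => i _; rewrite /= addnC. Qed.

Lemma diffjj u j : diffj u u j = 0.
Proof. by rewrite /diffj mulnC subrr. Qed.

Lemma diffj_swap u v j : diffj (swap u) (swap v) j = - diffj u v j.
Proof. by rewrite /diffj /= opprB mulnC [X in _ - X%:R]mulnC. Qed.

Lemma tnth_tgt1 (u v : idx) j i : tnth (tgt u v (ej j)).1 i = (tnth u.1 i + tnth v.1 i - (i == j))%N.
Proof. by rewrite tnth_mktuple. Qed.
Lemma tnth_tgt2 (u v : idx) j i : tnth (tgt u v (ej j)).2 i = (tnth u.2 i + tnth v.2 i - (i == j))%N.
Proof. by rewrite tnth_mktuple. Qed.

Lemma natr_subr_eq0 (a b : nat) : ((a%:R - b%:R : C) == 0) = (a == b).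
Proof. by rewrite subr_eq0 eqr_nat. Qed.

End D.

Section Ea.
Variables (C : numClosedFieldType) (n : nat) (j0 : 'I_n).
Local Notation idx := (widx n).
Local Notation W := (weyl C n).
Local Notation diffj := (@diffj C n).
Local Notation J := (pred1 j0).

Lemma phi1 (u : idx) : phi J u = (tnth u.1 j0 + tnth u.2 j0)%N.
Proof. by rewrite /phi big_pred1_eq. Qed.

Lemma Ssum1 (u v w : idx) : Ssum C J u v w = diffj u v j0 *+ (tgt u v (ej j0) == w).
Proof. by rewrite /Ssum big_pred1_eq. Qed.

Lemma phi_le (J' : pred 'I_n) (u : idx) : (phi J' u <= wsize u)%N.
Proof.
rewrite /phi wsizeE [X in (_ <= X)%N](bigID J') /=; exact: leq_addr.
Qed.

Lemma arithA (A B : nat) : A != B -> (2 <= A + B)%N ->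
  [/\ (B * B != A * A)%N, (B * (A + B - 1) != (B + A - 1) * A)%N,
     (1 <= A + (A + B - 1))%N /\ (1 <= B + (B + A - 1))%N,
     (A + (A + B - 1) - 1 != B + (B + A - 1) - 1)%N &
     (2 <= A + (A + B - 1) - 1 + (B + (B + A - 1) - 1))%N].
Proof.
move=> /eqP h1 h2; split; try (apply/eqP => e); try nia; lia.
Qed.

Definition Ia (p m : W) (D M : nat) (Wm : idx) (xp xm yp ym : C) :=
  [/\ topP J p D M, topP J m D M, descr J p D M Wm (swap Wm) xp xm,
      descr J m D M Wm (swap Wm) yp ym &
      [/\ wsize Wm = D, phi J Wm = M, tnth Wm.1 j0 != tnth Wm.2 j0
        & (2 <= tnth Wm.1 j0 + tnth Wm.2 j0)%N] /\
      [/\ xp != 0, xm != 0, yp != 0, ym != 0 & xm * yp - xp * ym != 0]].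

Lemma stepA (p m : W) D M Wm xp xm yp ym : Ia p m D M Wm xp xm yp ym ->
  exists Wm' xp' xm' yp' ym',
    Ia (wcomm p (wcomm p m)) (wcomm m (wcomm p m)) (D + (D + D - 2) - 2)
       (M + (M + M - 2) - 2) Wm' xp' xm' yp' ym'.
Proof.
case=> hp hm dp dm [[sW fW nAB hAB] [nxp nxm nyp nym nK]].
set A := tnth Wm.1 j0 in nAB hAB; set B := tnth Wm.2 j0 in nAB hAB.
have [ar1 ar2 ar3 ar4 ar5] := arithA nAB hAB.
have eM : M = (A + B)%N by rewrite -fW phi1.
have hD : (A + B <= D)%N by rewrite -sW -phi1 phi_le.
set W' := swap Wm.
have lW : leadb J D M Wm by rewrite /leadb sW fW !eqxx.
have lW' : leadb J D M W' by rewrite /leadb wsize_swap phi_swap sW fW !eqxx.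
set T := tgt Wm W' (ej j0).
have sT : swap T = T by rewrite /T swap_tgt swapK tgtC.
have T1 : tnth T.1 j0 = (A + B - 1)%N by rewrite tnth_tgt1 eqxx.
have T2 : tnth T.2 j0 = (B + A - 1)%N by rewrite tnth_tgt2 eqxx.
have b1 : (1 <= tnth Wm.1 j0 + tnth W'.1 j0)%N by rewrite /= -/A -/B; lia.
have b2 : (1 <= tnth Wm.2 j0 + tnth W'.2 j0)%N by rewrite /= -/A -/B; lia.
have sizT : (wsize T = D + D - 2)%N by have := wsize_tgt1 b1 b2; rewrite wsize_swap sW -/T; lia.
have phiT : (phi J T = M + M - 2)%N.
  by have := tgt_phi J b1 b2; rewrite phi_swap fW /= eqxx -/T; lia.
set d1 := diffj Wm W' j0.
have d2 : diffj W' Wm j0 = - d1 by rewrite /d1 -diffj_swap swapK.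
have nd1 : d1 != 0.
  by rewrite /d1 /diffj /= -/A -/B natr_subr_eq0.
set z := - d1 * (xm * yp - xp * ym).
have nz : z != 0 by rewrite mulf_neq0 // oppr_eq0.
set c := wcomm p m.
have tc : topP J c (D + D - 2) (M + M - 2) := comm_top hp hm.
have D2 : (2 <= D + D)%N by clear -hD hAB eM; lia.
have M2 : (2 <= M + M)%N by clear -hD hAB eM; lia.
have dc : descr J c (D + D - 2) (M + M - 2) T T z 0.
  move=> w hw hf; rewrite /c (lead2 hp hm D2 M2 dp dm lW lW' lW lW' hw hf).
  rewrite !Ssum1 !diffjj d2 (tgtC W') -/T !mul0rn !mulr0 add0r addr0 (eq_sym w).
  by case: (T == w); rewrite /= ?mulr0n ?mulr1n ?mulr0 ?addr0 /z -/W' -/d1; ring.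
have lT : leadb J (D + D - 2) (M + M - 2) T by rewrite /leadb sizT phiT !eqxx.
set W2 := tgt Wm T (ej j0).
have sW2 : tgt W' T (ej j0) = swap W2 by rewrite /W2 swap_tgt sT.
set d3 := diffj Wm T j0.
have d4 : diffj W' T j0 = - d3 by rewrite /d3 -diffj_swap sT.
have nd3 : d3 != 0.
  by rewrite /d3 /diffj -/A T1 T2 -/B natr_subr_eq0.
have c1 : (1 <= tnth Wm.1 j0 + tnth T.1 j0)%N by rewrite T1 -/A; case: ar3.
have c2 : (1 <= tnth Wm.2 j0 + tnth T.2 j0)%N by rewrite T2 -/B; case: ar3.
have D3 : (2 <= D + (D + D - 2))%N by clear -hD hAB eM; lia.
have M3 : (2 <= M + (M + M - 2))%N by clear -hD hAB eM; lia.
have gen : forall (q : W) a1 a2, descr J q D M Wm W' a1 a2 -> topP J q D M ->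
    descr J (wcomm q c) (D + (D + D - 2) - 2) (M + (M + M - 2) - 2)
       W2 (swap W2) (a1 * z * d3) (a2 * z * - d3).
  move=> q a1 a2 dq tq w hw hf.
  rewrite (lead2 tq tc D3 M3 dq dc lW lW' lT lT hw hf).
  rewrite !Ssum1 d4 sW2 -/W2 -/d3 !mulr0 !mul0r !addr0 (eq_sym W2) (eq_sym (swap W2)).
  by rewrite -!mulrnAr.
exists W2, (xp * z * d3), (xm * z * - d3), (yp * z * d3), (ym * z * - d3).
split.
- exact: comm_top hp tc.
- exact: comm_top hm tc.
- exact: gen.
- exact: gen.
split.
  split.
  + have := wsize_tgt1 c1 c2; rewrite sizT sW -/W2 => e.
    by clear -e hD hAB eM; lia.
  + have := tgt_phi J c1 c2; rewrite phiT fW /= eqxx -/W2 => e.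
    by clear -e hD hAB eM; lia.
  + by rewrite !tnth_tgt1 !tnth_tgt2 eqxx /= -/A -/B.
  + by rewrite !tnth_tgt1 !tnth_tgt2 eqxx /= -/A -/B.
split; try by rewrite !mulf_neq0 // oppr_eq0.
  have -> : xm * z * - d3 * (yp * z * d3) - xp * z * d3 * (ym * z * - d3)
      = - (z * d3) ^+ 2 * (xm * yp - xp * ym) by ring.
  by rewrite mulf_neq0 // oppr_eq0 expf_neq0 // mulf_neq0.
Qed.

End Ea.

Section Eb.
Variables (C : numClosedFieldType) (n : nat) (j0 j1 : 'I_n).
Hypothesis h01 : j0 != j1.
Local Notation idx := (widx n).
Local Notation W := (weyl C n).
Local Notation diffj := (@diffj C n).
Definition J2 : pred 'I_n := [pred j | (j == j0) || (j == j1)].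
Local Notation J := J2.

Lemma J2pred1 i : (J i && (i != j0)) = (i == j1).
Proof.
rewrite /J2 /=; case: (i =P j0) => [->|_] /=; first by rewrite (negbTE h01).
by rewrite andbT.
Qed.

Lemma phi2 (u : idx) : phi J u =
  (tnth u.1 j0 + tnth u.2 j0 + (tnth u.1 j1 + tnth u.2 j1))%N.
Proof.
rewrite /phi (bigD1 j0); last by rewrite /J2 /= eqxx.
by under eq_bigl do rewrite J2pred1; rewrite big_pred1_eq.
Qed.

Lemma Ssum2 (u v w : idx) : Ssum C J u v w =
  diffj u v j0 *+ (tgt u v (ej j0) == w) + diffj u v j1 *+ (tgt u v (ej j1) == w).
Proof.
rewrite /Ssum (bigD1 j0); last by rewrite /J2 /= eqxx.
by under eq_bigl do rewrite J2pred1; rewrite big_pred1_eq.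
Qed.

Definition Ib (p m : W) (D : nat) (Wm : idx) (xp xm yp ym : C) :=
  [/\ topP J p D 2, topP J m D 2, descr J p D 2 Wm (swap Wm) xp xm,
      descr J m D 2 Wm (swap Wm) yp ym &
      [/\ wsize Wm = D, (tnth Wm.1 j0 + tnth Wm.2 j0 = 1)%N
        & (tnth Wm.1 j1 + tnth Wm.2 j1 = 1)%N] /\
      [/\ xp != 0, xm != 0, yp != 0, ym != 0 & xm * yp - xp * ym != 0]].

Lemma sq01 (a b : nat) : (a + b = 1)%N ->
  [/\ ((b * b)%:R - (a * a)%:R : C) = b%:R - a%:R,
      ((b * 1)%:R - (1 * a)%:R : C) = b%:R - a%:R & (b%:R - a%:R : C) != 0].
Proof.
move=> h; have [-> ->] : (a * a = a /\ b * b = b)%N by split; nia.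
by rewrite muln1 mul1n natr_subr_eq0; split => //; apply/eqP; lia.
Qed.

Lemma stepB (p m : W) D Wm xp xm yp ym : Ib p m D Wm xp xm yp ym ->
  exists Wm' xp' xm' yp' ym',
    Ib (wcomm p (wcomm p m)) (wcomm m (wcomm p m)) (D + (D + D - 2) - 2)
       Wm' xp' xm' yp' ym'.
Proof.
case=> hp hm dp dm [[sW h0 h1] [nxp nxm nyp nym nK]].
set a0 := tnth Wm.1 j0 in h0; set b0 := tnth Wm.2 j0 in h0.
set a1 := tnth Wm.1 j1 in h1; set b1 := tnth Wm.2 j1 in h1.
have fW : phi J Wm = 2%N by rewrite phi2 -/a0 -/b0 -/a1 -/b1 h0 h1.
have hD : (2 <= D)%N by rewrite -sW -fW phi_le.
have D2 : (2 <= D + D)%N by clear -hD; lia.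
have D3 : (2 <= D + (D + D - 2))%N by clear -hD; lia.
have n10 : j1 != j0 by rewrite eq_sym.
set W' := swap Wm.
have lW : leadb J D 2 Wm by rewrite /leadb sW fW !eqxx.
have lW' : leadb J D 2 W' by rewrite /leadb wsize_swap phi_swap sW fW !eqxx.
set T0 := tgt Wm W' (ej j0).
set T1 := tgt Wm W' (ej j1).
have sT0 : swap T0 = T0 by rewrite /T0 swap_tgt swapK tgtC.
have sT1 : swap T1 = T1 by rewrite /T1 swap_tgt swapK tgtC.
have b01 : (1 <= tnth Wm.1 j0 + tnth W'.1 j0)%N by rewrite /= -/a0 -/b0 h0.
have b02 : (1 <= tnth Wm.2 j0 + tnth W'.2 j0)%N by rewrite /= -/a0 -/b0 addnC h0.
have b11 : (1 <= tnth Wm.1 j1 + tnth W'.1 j1)%N by rewrite /= -/a1 -/b1 h1.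
have b12 : (1 <= tnth Wm.2 j1 + tnth W'.2 j1)%N by rewrite /= -/a1 -/b1 addnC h1.
have sizT0 : (wsize T0 = D + D - 2)%N.
  by have := wsize_tgt1 b01 b02; rewrite wsize_swap sW -/T0 => e; clear -e; lia.
have sizT1 : (wsize T1 = D + D - 2)%N.
  by have := wsize_tgt1 b11 b12; rewrite wsize_swap sW -/T1 => e; clear -e; lia.
have phiT0 : (phi J T0 = 2)%N.
  by have := tgt_phi J b01 b02; rewrite phi_swap fW /J2 /= eqxx /= -/T0 => e; clear -e; lia.
have phiT1 : (phi J T1 = 2)%N.
  by have := tgt_phi J b11 b12; rewrite phi_swap fW /J2 /= eqxx orbT /= -/T1 => e; clear -e; lia.
have lT0 : leadb J (D + D - 2) 2 T0 by rewrite /leadb sizT0 phiT0 !eqxx.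
have lT1 : leadb J (D + D - 2) 2 T1 by rewrite /leadb sizT1 phiT1 !eqxx.
set d0 := diffj Wm W' j0.
set e0 := diffj Wm W' j1.
have sd : forall u v j, diffj (swap u) (swap v) j = - diffj u v j := @diffj_swap C n.
set K0 := xp * ym - xm * yp.
set c := wcomm p m.
have tc : topP J c (D + D - 2) 2 := comm_top hp hm.
have dc : descr J c (D + D - 2) 2 T0 T1 (K0 * d0) (K0 * e0).
  move=> w hw hf; rewrite /c (lead2 hp hm D2 isT dp dm lW lW' lW lW' hw hf).
  have m0 : diffj W' Wm j0 = - d0 by rewrite /d0 -sd swapK.
  have m1 : diffj W' Wm j1 = - e0 by rewrite /e0 -sd swapK.
  rewrite !Ssum2 !diffjj -/W' m0 m1 (tgtC W' Wm (ej j0)) (tgtC W' Wm (ej j1)) -/T0 -/T1 -/d0 -/e0.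
  rewrite -/d0 -/e0 (eq_sym w) (eq_sym w) /K0.
  by case: (T0 == w); case: (T1 == w); rewrite /= ?mulr0n ?mulr1n; ring.
set W2 := tgt Wm T0 (ej j1).
have eW2 : tgt Wm T1 (ej j0) = W2.
  rewrite /W2 /T0 /T1 /tgt; congr pair; apply: eq_mktuple => i;
    rewrite !tnth_mktuple /ej /=;
    (case: (i =P j0) => [->|ne0]; [rewrite (negbTE h01) /= -/a0 -/b0; clear -h0; lia|]);
    (case: (i =P j1) => [->|ne1] /=; [rewrite -/a1 -/b1; clear -h1; lia|]); lia.
have sW2 : tgt W' T0 (ej j1) = swap W2 by rewrite /W2 swap_tgt sT0.
have sW2' : tgt W' T1 (ej j0) = swap W2 by rewrite -eW2 swap_tgt sT1.
have zA : diffj Wm T0 j0 = 0.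
  rewrite /diffj !tnth_tgt1 !tnth_tgt2 eqxx /= -/a0 -/b0 h0 addnC h0 subnn.
  by rewrite !muln0 !mul0n subrr.
have zB : diffj Wm T1 j1 = 0.
  rewrite /diffj !tnth_tgt1 !tnth_tgt2 eqxx /= -/a1 -/b1 h1 addnC h1 subnn.
  by rewrite !muln0 !mul0n subrr.
have [s0a s0b s0n] := sq01 h0.
have [s1a s1b s1n] := sq01 h1.
have f1 : diffj Wm T0 j1 = b1%:R - a1%:R.
  rewrite /diffj !tnth_tgt1 !tnth_tgt2 (negbTE n10) /= -/a1 -/b1 !subn0 h1 addnC h1.
  exact: s1b.
have f0 : diffj Wm T1 j0 = b0%:R - a0%:R.
  rewrite /diffj !tnth_tgt1 !tnth_tgt2 (negbTE h01) /= -/a0 -/b0 !subn0 h0 addnC h0.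
  exact: s0b.
have ed0 : d0 = b0%:R - a0%:R by rewrite /d0 /diffj /= -/a0 -/b0 s0a.
have ed1 : e0 = b1%:R - a1%:R by rewrite /e0 /diffj /= -/a1 -/b1 s1a.
set g := K0 * d0 * (b1%:R - a1%:R) + K0 * e0 * (b0%:R - a0%:R).
have ng : g != 0.
  have -> : g = 2%:R * (b0%:R - a0%:R) * (b1%:R - a1%:R) * K0 by rewrite /g ed0 ed1; ring.
  rewrite !mulf_neq0 ?pnatr_eq0 //.
  by rewrite /K0 -opprB oppr_eq0.
have gen : forall (q : W) x1 x2, descr J q D 2 Wm W' x1 x2 -> topP J q D 2 ->
    descr J (wcomm q c) (D + (D + D - 2) - 2) 2 W2 (swap W2) (x1 * g) (x2 * - g).
  move=> q x1 x2 dq tq w hw hf.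
  rewrite (lead2 tq tc D3 isT dq dc lW lW' lT0 lT1 hw hf).
  have g0 : forall j, diffj W' T0 j = - diffj Wm T0 j by move=> j; rewrite -sd sT0.
  have g1 : forall j, diffj W' T1 j = - diffj Wm T1 j by move=> j; rewrite -sd sT1.
  rewrite !Ssum2 !g0 !g1 zA zB f1 f0 eW2 sW2 sW2' oppr0 !mul0rn !add0r !addr0.
  rewrite -/W2 (eq_sym _ w) (eq_sym _ w).
  by case: (w == W2); case: (w == swap W2); rewrite /= ?mulr0n ?mulr1n /g; ring.
exists W2, (xp * g), (xm * - g), (yp * g), (ym * - g).
split.
- exact: comm_top hp tc.
- exact: comm_top hm tc.
- exact: gen.
- exact: gen.
split.
  split.
  + have c1 : (1 <= tnth Wm.1 j1 + tnth T0.1 j1)%N.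
      by rewrite tnth_tgt1 (negbTE n10) /= -/a1 -/b1; clear -h1; lia.
    have c2 : (1 <= tnth Wm.2 j1 + tnth T0.2 j1)%N.
      by rewrite tnth_tgt2 (negbTE n10) /= -/a1 -/b1; clear -h1; lia.
    have := wsize_tgt1 c1 c2; rewrite sizT0 sW -/W2 => e.
    by clear -e hD; lia.
  + rewrite !tnth_tgt1 !tnth_tgt2 (negbTE h01) eqxx /= -/a0 -/b0.
    by clear -h0; lia.
  + rewrite !tnth_tgt1 !tnth_tgt2 (negbTE n10) eqxx /= -/a1 -/b1.
    by clear -h1; lia.
split; try by rewrite !mulf_neq0 // oppr_eq0.
have -> : xm * - g * (yp * g) - xp * g * (ym * - g) = - g ^+ 2 * (xm * yp - xp * ym)
  by ring.
by rewrite mulf_neq0 // oppr_eq0 expf_neq0.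
Qed.

End Eb.

Section F.
Variables (C : numClosedFieldType) (n : nat).
Local Notation idx := (widx n).
Local Notation W := (weyl C n).

Lemma wdag_basis (g : idx) : wdag (wbasis C g) = << 1 *g swap g >>.
Proof.
rewrite /wdag /wbasis msuppU oner_eq0 big_seq_fset1 mcoeffUU conjC1.
by [].
Qed.

Lemma mcU (k u : idx) (x : C) : (<< x *g k >> : W)@_u = x *+ (k == u).
Proof. exact: mcoeffU. Qed.

Lemma gplusE (g u : idx) : (gplus C g)@_u = 'i *+ (u == g) + 'i *+ (u == swap g).
Proof.
have e1 : (gplus C g)@_u = 'i * ((<< 1 *g swap g >> : W)@_u + (<< 1 *g g >> : W)@_u).
  rewrite /gplus wdag_basis /wbasis -mcoeffD; exact: mcoeffZ.
have e2 : (<< 1 *g swap g >> : W)@_u = (swap g == u)%:R := mcU _ _ _.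
have e3 : (<< 1 *g g >> : W)@_u = (g == u)%:R := mcU _ _ _.
transitivity (('i : C) * ((swap g == u)%:R + (g == u)%:R)).
  by rewrite e1; congr (_ * (_ + _)).
by rewrite mulrDr !mulr_natr addrC (eq_sym g) (eq_sym (swap g)).
Qed.

Lemma gminusE (g u : idx) : (gminus C g)@_u = -1 *+ (u == g) + 1 *+ (u == swap g).
Proof.
have e1 : (gminus C g)@_u = (<< 1 *g swap g >> : W)@_u - (<< 1 *g g >> : W)@_u.
  rewrite /gminus wdag_basis /wbasis; exact: mcoeffB.
have e2 : (<< 1 *g swap g >> : W)@_u = (swap g == u)%:R := mcU _ _ _.
have e3 : (<< 1 *g g >> : W)@_u = (g == u)%:R := mcU _ _ _.
transitivity ((swap g == u)%:R - (g == u)%:R : C).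
  by rewrite e1; congr (_ - _).
by rewrite addrC mulNrn (eq_sym g) (eq_sym (swap g)).
Qed.

Lemma swap_neq (u : idx) j : tnth u.1 j != tnth u.2 j -> u != swap u.
Proof.
move=> h; apply/eqP => e; move/eqP: h; apply.
by case: u e => a b /= [->].
Qed.

Lemma top_init J (g : idx) (q : W) a b :
  (forall u, q@_u = a *+ (u == g) + b *+ (u == swap g)) ->
  topP J q (wsize g) (phi J g).
Proof.
move=> e u; rewrite e; case: (u =P g) => [->|_]; first by split.
case: (u =P swap g) => [->|_]; first by rewrite wsize_swap phi_swap; split.
by rewrite /= !mulr0n addr0 eqxx.
Qed.

Lemma wdeg_of J (p : W) D M (Wm : idx) : topP J p D M -> p@_Wm != 0 -> wsize Wm = D ->
  wdeg p = Some D.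
Proof.
move=> tp nz sW; rewrite /wdeg.
have -> : (p == 0) = false by apply/negbTE; apply: contra nz => /eqP ->; rewrite mcoeff0.
congr Some; apply/eqP; rewrite eqn_leq; apply/andP; split.
  apply/bigmax_leqP_seq => u hu _.
  by move: hu; rewrite -mcoeff_neq0 => /tp [h _].
by rewrite -sW; apply: leq_bigmax_seq => //; rewrite -mcoeff_neq0.
Qed.

Lemma descr_at J (p : W) D M Wm x1 x2 : descr J p D M Wm (swap Wm) x1 x2 ->
  wsize Wm = D -> phi J Wm = M -> Wm != swap Wm -> p@_Wm = x1.
Proof.
by move=> d s f ne; rewrite d // eqxx (negbTE ne) /= mulr0n addr0.
Qed.

Fixpoint dseq (d : nat) (l : nat) : nat :=
  match l with 0 => d | l'.+1 => let x := dseq d l' in (x + (x + x - 2) - 2)%N end.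

Lemma dseqE s l : (2 <= s)%N -> dseq s l = (3 ^ l * (s - 2) + 2)%N.
Proof.
move=> hs; elim: l => [|l IH] /=; first by rewrite expn0 mul1n; lia.
rewrite IH expnS -mulnA; set X := (3 ^ l * (s - 2))%N; lia.
Qed.

End F.


Lemma K0_nz (C : numClosedFieldType) : ('i : C) * -1 - 'i * 1 != 0.
Proof.
have -> : ('i : C) * -1 - 'i * 1 = - (2%:R * 'i) by ring.
by rewrite oppr_eq0 mulf_neq0 ?pnatr_eq0 ?neq0Ci.
Qed.

Theorem proposition9 (C : numClosedFieldType) (n : nat) (hn : (0 < n)%N)
    (al be : n.-tuple nat) (hlex : lex_ge al be)
    (hab : (exists k : 'I_n, (2 <= tnth al k + tnth be k)%N /\ tnth al k <> tnth be k)
        \/ (exists k k' : 'I_n, k <> k' /\ (tnth al k + tnth be k = 1)%N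
                                 /\ (tnth al k' + tnth be k' = 1)%N)) :
  forall l : nat,
    let y := chainII (gplus C (al, be)) (gminus C (al, be)) l in
    wdeg y.1 = Some (3 ^ l * (wsize (al, be) - 2) + 2)%N /\
    wdeg y.2 = Some (3 ^ l * (wsize (al, be) - 2) + 2)%N.
Proof.
move=> l y; rewrite /y; clear y.
set g : widx n := (al, be).
set s := wsize g.
have tp := @top_init C n _ g _ _ _ (gplusE C g).
have tm := @top_init C n _ g _ _ _ (gminusE C g).
have nI : ('i : C) != 0 by rewrite neq0Ci.
have n1 : (-1 : C) != 0 by rewrite oppr_eq0 oner_eq0.
case: hab => [[k [hk hne]] | [k [k' [hkk [hk hk']]]]].
- set M := phi (pred1 k) g.
  have hne' : tnth g.1 k != tnth g.2 k by apply/eqP.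
  have I0 : Ia k (gplus C g) (gminus C g) s M g 'i 'i (-1) 1.
    split.
    + exact: tp.
    + exact: tm.
    + by move=> u _ _; exact: gplusE.
    + by move=> u _ _; exact: gminusE.
    split; first by split.
    by split; rewrite ?oner_eq0 //; exact: K0_nz.
  have hs : (2 <= s)%N by apply: leq_trans (phi_le (pred1 k) g); rewrite phi1.
  have H : forall l, exists Wm xp xm yp ym,
      Ia k (chainII (gplus C g) (gminus C g) l).1
           (chainII (gplus C g) (gminus C g) l).2 (dseq s l) (dseq M l) Wm xp xm yp ym.
    elim=> [|l' [Wm [xp [xm [yp [ym IH]]]]]]; first by exists g, 'i, 'i, (-1), 1.
    move: IH; rewrite /=; case: (chainII _ _ l') => p m /= IH.
    exact: stepA IH.
  have [Wm [xp [xm [yp [ym [hp hm dp dm [[sW fW nAB _] [nxp _ nyp _ _]]]]]]]] := H l.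
  rewrite -(dseqE l hs); split.
  + apply: (wdeg_of hp _ sW); rewrite (descr_at dp sW fW (swap_neq nAB)) //.
  + apply: (wdeg_of hm _ sW); rewrite (descr_at dm sW fW (swap_neq nAB)) //.
- have h01 : k != k' by apply/eqP.
  have fg : phi (J2 k k') g = 2%N by rewrite phi2 //= hk hk'.
  have I0 : Ib k k' (gplus C g) (gminus C g) s g 'i 'i (-1) 1.
    split.
    + by rewrite -fg; exact: tp.
    + by rewrite -fg; exact: tm.
    + by move=> u _ _; exact: gplusE.
    + by move=> u _ _; exact: gminusE.
    split; first by split.
    by split; rewrite ?oner_eq0 //; exact: K0_nz.
  have hs : (2 <= s)%N by rewrite /s -fg; exact: phi_le.
  have H : forall l, exists Wm xp xm yp ym,
      Ib k k' (chainII (gplus C g) (gminus C g) l).1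
           (chainII (gplus C g) (gminus C g) l).2 (dseq s l) Wm xp xm yp ym.
    elim=> [|l' [Wm [xp [xm [yp [ym IH]]]]]]; first by exists g, 'i, 'i, (-1), 1.
    move: IH; rewrite /=; case: (chainII _ _ l') => p m /= IH.
    exact (stepB h01 IH).
  have [Wm [xp [xm [yp [ym [hp hm dp dm [[sW h0 h1] [nxp _ nyp _ _]]]]]]]] := H l.
  have fW : phi (J2 k k') Wm = 2%N by rewrite phi2 // h0 h1.
  have nAB : tnth Wm.1 k != tnth Wm.2 k by apply/eqP => e; move: h0; rewrite e; lia.
  rewrite -(dseqE l hs); split.
  + apply: (wdeg_of hp _ sW); rewrite (descr_at dp sW fW (swap_neq nAB)) //.
  + apply: (wdeg_of hm _ sW); rewrite (descr_at dm sW fW (swap_neq nAB)) //.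
Qed.
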